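(* Assume (H3): for all $m$ and all $(x,v)\in X^m\times Y^m$, if $I(x)\cap\mathrm{supp}_{\iota_X(n)}(w)\neq\emptyset$ for some $n$, then for all $k=n,\dots,m$, $\mathrm{proj}_{m\to k}(\Phi^{(m)}(x,v))=\Phi^{(k)}(\mathrm{proj}_{m\to k}(x,v))$. Then for all $n\in\mathbb{N}$, the involution $\Phi^{(n)}$ maps $\mathbb{S}^{\mathrm{valid}}_n$ into $\mathbb{S}^{\mathrm{valid}}_n$; i.e. if $(x,v)\in\mathbb{S}^{\mathrm{valid}}_n$ then $\Phi^{(n)}(x,v)\in\mathbb{S}^{\mathrm{valid}}_n$.
   Context: $\mathbb{2}=\{\mathsf{T},\mathsf{F}\}$, $\Omega=\mathbb{R}\cup\mathbb{2}$, trace space $\mathbb{T}=\bigcup_{n\ge0}\Omega^n$; $w:\mathbb{T}\to[0,\infty)$ is a measurable tree representable function (prefix property: if $t\in\mathrm{supp}_n(w)$ then no proper prefix of $t$ is in $\mathrm{supp}(w)$; type property: if $t\in\mathrm{supp}_n(w)$, $k<n$ and $s\in\Omega$ lies in the other of $\mathbb{R},\mathbb{2}$ than $t_{k+1}$, then $t^{1\dots k}++[s]\notin\mathrm{supp}(w)$), where $\mathrm{supp}(w)=\{t\mid w(t)>0\}$ and $\mathrm{supp}_m(w)=\mathrm{supp}(w)\cap\Omega^m$. Entropy space $\mathbb{E}=\mathbb{R}\times\mathbb{2}$. A trace $t$ is an instance of $x\in\mathbb{E}^m$ if $|t|\le m$ and $t_i\in\{r_i,a_i\}$ for $i\le|t|$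 where $x_i=(r_i,a_i)$; $I(x)$ is the set of instances. Fix strictly monotone $\iota_X,\iota_Y:\mathbb{N}\to\mathbb{N}$, $X^n=\mathbb{E}^{\iota_X(n)}$, $Y^n=\mathbb{E}^{\iota_Y(n)}$; every trace in $\mathrm{supp}(w)$ has length $\iota_X(k)$ for some $k$. For $k\le n$, $\mathrm{proj}_{n\to k}(x,v)=(x^{1\dots\iota_X(k)},v^{1\dots\iota_Y(k)})$. For each $n$, $\Phi^{(n)}$ is an involution of $X^n\times Y^n$. The set of valid states is defined by recursion on $n$: an $n$-dimensional state $(x,v)\in X^n\times Y^n$ is valid, written $(x,v)\in\mathbb{S}^{\mathrm{valid}}_n$, if (i) $I(x)\cap\mathrm{supp}(w)\neq\emptyset$; (ii) writing $(y,u)=\Phi^{(n)}(x,v)$, $I(y)\cap\mathrm{supp}(w)\neq\emptyset$; and (iii) $\mathrm{proj}_{n\to k}(x,v)\notin\mathbb{S}^{\mathrm{valid}}_k$ for all $k<n$. *)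

(* Defs.v *)
From Stdlib Require Import Reals.
From mathcomp Require Import all_boot.
Set Implicit Arguments. Unset Strict Implicit. Unset Printing Implicit Defensive.

Definition Omega := (R + bool)%type.
Definition trace := seq Omega.
(* Entropy space E = R × 2; an element of E^m is a sequence of length m. *)
Definition Ent := (R * bool)%type.
Definition state := (seq Ent * seq Ent)%type.

Definition omega0 : Omega := inr true.
Definition ent0 : Ent := (R0, true).

Definition in_supp (w : trace -> R) (t : trace) : Prop := Rlt R0 (w t).

Definition prefix_property (w : trace -> R) : Prop :=
  forall t, in_supp w t -> forall k, k < size t -> ~ in_supp w (take k t).

Definition same_kind (a b : Omega) : bool := is_inl a == is_inl b.

Definition type_property (w : trace -> R) : Prop :=
  forall t, in_supp w t -> forall k, k < size t ->
  forall s : Omega, ~~ same_kind s (nth omega0 t k) ->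
  ~ in_supp w (take k t ++ [:: s]).

Definition instance (t : trace) (x : seq Ent) : Prop :=
  size t <= size x /\
  forall i, i < size t ->
    nth omega0 t i = inl (nth ent0 x i).1 \/ nth omega0 t i = inr (nth ent0 x i).2.

Definition meets_supp (w : trace -> R) (x : seq Ent) : Prop :=
  exists t, instance t x /\ in_supp w t.

Definition proj (iX iY : nat -> nat) (k : nat) (s : state) : state :=
  (take (iX k) s.1, take (iY k) s.2).

Definition in_XY (iX iY : nat -> nat) (n : nat) (s : state) : Prop :=
  size s.1 = iX n /\ size s.2 = iY n.

(* conditions (i), (ii) of validity, together with (x,v) ∈ X^n × Y^n *)
Definition valid_base (iX iY : nat -> nat) (w : trace -> R)
  (Phi : nat -> state -> state) (n : nat) (s : state) : Prop :=
  in_XY iX iY n s /\ meets_supp w s.1 /\ meets_supp w (Phi n s).1.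

(* Recursive definition of valid states, via a fuel argument:
   valid_aux f n s is the correct recursive predicate whenever f > n. *)
Fixpoint valid_aux (iX iY : nat -> nat) (w : trace -> R)
  (Phi : nat -> state -> state) (fuel n : nat) (s : state) : Prop :=
  match fuel with
  | 0 => False
  | fuel'.+1 =>
      valid_base iX iY w Phi n s /\
      forall k, k < n -> ~ valid_aux iX iY w Phi fuel' k (proj iX iY k s)
  end.

Definition valid (iX iY : nat -> nat) (w : trace -> R)
  (Phi : nat -> state -> state) (n : nat) (s : state) : Prop :=
  valid_aux iX iY w Phi n.+1 n s.

(* Sanity: the fuel is irrelevant once it exceeds n, so [valid] satisfies the
   defining recursive equation. *)
Lemma valid_aux_fuel iX iY w Phi f : forall g n s,
  n < f -> n < g -> valid_aux iX iY w Phi f n s <-> valid_aux iX iY w Phi g n s.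
Proof.
elim: f => [|f IH] [|g] n s //= Hf Hg.
split=> -[B H]; split=> // k Hk V; apply: (H k Hk).
- by apply/(IH g k _ (leq_trans Hk Hf) (leq_trans Hk Hg)).
- by apply/(IH g k _ (leq_trans Hk Hf) (leq_trans Hk Hg)).
Qed.

Lemma valid_eq iX iY w Phi n s :
  valid iX iY w Phi n s <->
  valid_base iX iY w Phi n s /\
  forall k, k < n -> ~ valid iX iY w Phi k (proj iX iY k s).
Proof.
split=> -[B H]; split=> // k Hk V; apply: (H k Hk); move: V; rewrite /valid -/valid_aux => V.
- exact (proj1 (@valid_aux_fuel iX iY w Phi (k.+1) n k _ (ltnSn k) Hk) V).
- exact (proj1 (@valid_aux_fuel iX iY w Phi n k.+1 k _ Hk (ltnSn k)) V).
Qed.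

(* Main.v *)
Require Import Defs.
From Stdlib Require Import Reals.
From mathcomp Require Import all_boot.

Theorem propositionB6
  (w : trace -> R) (iX iY : nat -> nat) (Phi : nat -> state -> state)
  (* w is nonnegative and tree representable *)
  (w_ge0 : forall t, Rle R0 (w t))
  (w_prefix : prefix_property w)
  (w_type : type_property w)
  (* iota_X, iota_Y strictly monotone *)
  (iX_mono : forall a b, a < b -> iX a < iX b)
  (iY_mono : forall a b, a < b -> iY a < iY b)
  (* every trace in supp(w) has length iota_X(k) for some k *)
  (supp_len : forall t, in_supp w t -> exists k, size t = iX k)
  (* each Phi^(n) is an involution of X^n × Y^n *)
  (Phi_maps : forall n s, in_XY iX iY n s -> in_XY iX iY n (Phi n s))
  (Phi_invol : forall n s, in_XY iX iY n s -> Phi n (Phi n s) = s)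
  (* (H3) *)
  (H3 : forall m x v, in_XY iX iY m (x, v) ->
     forall n, (exists t, instance t x /\ in_supp w t /\ size t = iX n) ->
     forall k, n <= k <= m ->
       proj iX iY k (Phi m (x, v)) = Phi k (proj iX iY k (x, v))) :
  forall n x v, valid iX iY w Phi n (x, v) -> valid iX iY w Phi n (Phi n (x, v)).
Proof.
have inst_take : forall t (y : seq Ent) m, instance t (take m y) -> instance t y.
  move=> t y m [Hs Hn]; split.
    by apply: leq_trans Hs _; rewrite size_take; case: ltnP => // /ltnW.
  move=> i Hi; have := Hn i Hi; rewrite nth_take //.
  by apply: leq_trans Hi (leq_trans Hs _); rewrite size_take; case: ltnP => // /ltnW.
have iX_le : forall a b, a <= b -> iX a <= iX b.
  move=> a b; rewrite leq_eqVlt => /orP [/eqP -> //| /iX_mono /ltnW //].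
have iY_le : forall a b, a <= b -> iY a <= iY b.
  move=> a b; rewrite leq_eqVlt => /orP [/eqP -> //| /iY_mono /ltnW //].
have iX_inv : forall a b, iX a <= iX b -> a <= b.
  move=> a b H; case: (leqP a b) => // /iX_mono H'; by move: (leq_trans H' H); rewrite ltnn.
move=> n x v /valid_eq [[XY [Mx My]] Hnv].
have XY' := Phi_maps _ _ XY.
have Hinv := Phi_invol _ _ XY.
apply/valid_eq; split.
  split=> //; split=> //; by rewrite Hinv.
move=> k Hk Vk.
case: (Phi n (x, v)) XY' Hinv Vk My => y u XY' Hinv Vk My.
move/valid_eq: (Vk) => [[XYk [Mk1 Mk2]] Hk'].
have kn : iX k <= iX n by apply: iX_le; apply: ltnW.
case: (Mk1) => t' [It' St'].
case: (supp_len _ St') => j' Hj'.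
have j'k : j' <= k.
  apply: iX_inv; rewrite -Hj'; case: It' => + _ => /leq_trans; apply.
  by rewrite /= size_take; case: ltnP => // /ltnW.
have E := H3 n y u XY' j' (ex_intro _ t' (conj (inst_take _ _ _ It') (conj St' Hj'))) k.
rewrite j'k /= (ltnW Hk) Hinv in E.
have E' : proj iX iY k (x, v) = Phi k (proj iX iY k (y, u)) by apply: E.
apply: (Hnv k Hk); apply/valid_eq; split.
  split; first by case: XY => /= H1 H2; rewrite /in_XY /= !size_take H1 H2 ?(kn) (iX_mono _ _ Hk) (iY_mono _ _ Hk).
  split; first by rewrite E'.
  by rewrite E' Phi_invol.
move=> k' Hk'k; rewrite /proj /= !take_takel; first by apply: Hnv; apply: ltn_trans Hk'k Hk.
  by apply: iY_le; apply: ltnW.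
by apply: iX_le; apply: ltnW.
Qed.
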